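(* Let $q=2^n$ be such that $q-1$ is prime. Then there exists a linear $(q-3,q-1,q)$-AONT over $\mathbb{F}_q$, i.e. an invertible $(q-1)\times(q-1)$ matrix over $\mathbb{F}_q$ all of whose $(q-3)\times(q-3)$ submatrices are invertible.
   Context: A linear $(t,s,q)$-AONT over $\mathbb{F}_q$ is given by an invertible $s\times s$ matrix $M$ over $\mathbb{F}_q$ (transform $(y_1,\dots,y_s)=(x_1,\dots,x_s)M^{-1}$); $M$ defines a linear $(t,s,q)$-AONT iff every $t\times t$ submatrix of $M$ is invertible (a $0\times0$ submatrix counts as invertible). *)

(* Defs.v *)
From mathcomp Require Import all_boot all_order all_algebra all_field.
Set Implicit Arguments. Unset Strict Implicit. Unset Printing Implicit Defensive.
Import GRing.Theory.
Local Open Scope ring_scope.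

(* The order of the chosen rows/columns only affects the sign of the
   determinant, hence not invertibility.  For t = 0 the (unique) 0x0
   submatrix is invertible, matching the paper's convention. *)
Definition all_submx_invertible (F : fieldType) (t s : nat) (M : 'M[F]_s) :=
  forall (f g : 'I_t -> 'I_s), injective f -> injective g ->
    mxsub f g M \in unitmx.

Definition linear_AONT (F : fieldType) (t s : nat) (M : 'M[F]_s) :=
  M \in unitmx /\ all_submx_invertible t M.

(* Main.v *)
Require Import Defs.
From mathcomp Require Import all_boot all_order all_algebra all_field.
From mathcomp Require Import ring.
From mathcomp Require Import zify.
Set Implicit Arguments. Unset Strict Implicit. Unset Printing Implicit Defensive.
Import GRing.Theory.
Local Open Scope ring_scope.

Lemma key (F : fieldType) (s t : nat) (A : 'M[F]_s) : A \in unitmx -> (t + 2 = s)%N ->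
  (forall k1 k2 l1 l2, k1 != k2 -> l1 != l2 -> A k1 l1 * A k2 l2 != A k1 l2 * A k2 l1) ->
  all_submx_invertible t (invmx A).
Proof.
move=> Au hts H2 f g fi gi.
rewrite unitmxE unitfE; apply/negP => /det0P [v v0 vM].
set M := invmx A.
set u := v *m rowsub f 1%:M.
have uf a : u 0 (f a) = v 0 a.
  rewrite !mxE (bigD1 a) //= big1 ?addr0; first by rewrite !mxE eqxx mulr1.
  by move=> b hb; rewrite !mxE (inj_eq fi) (negbTE hb) mulr0.
have u0 j : j \notin f @: [set: 'I_t] -> u 0 j = 0.
  move=> hj; rewrite !mxE big1 // => b _; rewrite !mxE.
  case: eqP => [e|]; last by rewrite mulr0.
  by case/negP: hj; rewrite -e imset_f ?inE.
set w := u *m M.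
have wg b : w 0 (g b) = 0.
  have := congr1 (fun X : 'rV_t => X ord0 b) vM; rewrite mxE [RHS]mxE => <-.
  rewrite /w -mulmxA -rowsubE mxE; apply: eq_bigr => a _; by rewrite !mxE.
have uw : u = w *m A by rewrite /w -mulmxA mulVmx // mulmx1.
have cardC (h : 'I_t -> 'I_s) : injective h -> #|~: (h @: [set: 'I_t])| = 2%N.
  move=> hi; have := cardsC (h @: [set: 'I_t]).
  rewrite card_imset // cardsT !card_ord => e.
  by apply/eqP; rewrite -(eqn_add2l t) e hts.
have /cards2P [l1 [l2 [hl Cf]]] : #|~: (f @: [set: 'I_t])| == 2%N by rewrite cardC.
have /cards2P [k1 [k2 [hk Cg]]] : #|~: (g @: [set: 'I_t])| == 2%N by rewrite cardC.
have wout i : i != k1 -> i != k2 -> w 0 i = 0.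
  move=> h1 h2; have : i \notin ~: (g @: [set: 'I_t]) by rewrite Cg !inE negb_or h1 h2.
  by rewrite inE negbK => /imsetP [c _ ->]; apply: wg.
have eq j : j \in [set l1; l2] -> w 0 k1 * A k1 j + w 0 k2 * A k2 j = 0.
  move=> hj; rewrite -Cf inE in hj; rewrite -(u0 _ hj) uw [RHS]mxE (bigD1 k1) //= (bigD1 k2) /=;
    last by rewrite eq_sym.
  rewrite big1 ?addr0 ?addrA // => i /andP [h1 h2]; by rewrite wout ?mul0r.
have e1 := eq l1 (setU11 _ _). have e2 := eq l2 (setU1r _ (set11 _)).
have D0 : A k1 l1 * A k2 l2 - A k1 l2 * A k2 l1 != 0 by rewrite subr_eq0 H2.
have a0 : w 0 k1 = 0.
  apply/eqP; rewrite -(mulIr_eq0 _ (mulIf D0)).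
  have -> : w 0 k1 * (A k1 l1 * A k2 l2 - A k1 l2 * A k2 l1) =
     A k2 l2 * (w 0 k1 * A k1 l1 + w 0 k2 * A k2 l1) - A k2 l1 * (w 0 k1 * A k1 l2 + w 0 k2 * A k2 l2) by ring.
  by rewrite e1 e2 !mulr0 subrr.
have b0 : w 0 k2 = 0.
  apply/eqP; rewrite -(mulIr_eq0 _ (mulIf D0)).
  have -> : w 0 k2 * (A k1 l1 * A k2 l2 - A k1 l2 * A k2 l1) =
     A k1 l1 * (w 0 k1 * A k1 l2 + w 0 k2 * A k2 l2) - A k1 l2 * (w 0 k1 * A k1 l1 + w 0 k2 * A k2 l1) by ring.
  by rewrite e1 e2 !mulr0 subrr.
have w0 : w = 0.
  apply/matrixP => i j; rewrite ord1 [RHS]mxE.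
  case: (eqVneq j k1) => [->|h1]; first exact: a0.
  case: (eqVneq j k2) => [->|h2]; first exact: b0.
  exact: wout.
case/negP: v0; apply/eqP/matrixP => i a; by rewrite ord1 -uf uw w0 mul0mx !mxE.
Qed.

Lemma expo (F : fieldType) (s : nat) (al : F) : prime s -> al != 1 -> al ^+ s = 1 ->
  forall m, al ^+ m = 1 -> (s %| m)%N.
Proof.
move=> ps a1 as1 m am; apply/negP => nd.
have cop : coprime s m by rewrite prime_coprime //; exact/negP.
have s0 : (0 < s)%N by apply: prime_gt0.
case: (Bezoutl m s0) => a _; rewrite (eqP cop) => /dvdnP [k hk].
case/negP: a1; apply/eqP.
have : al ^+ (1 + a * m) = al ^+ (k * s) by rewrite hk.
by rewrite exprD expr1 mulnC exprM am expr1n mulr1 mulnC exprM as1 expr1n.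
Qed.

Theorem corollary2p28 (F : finFieldType) (n : nat) :
  #|F| = (2 ^ n)%N -> prime (2 ^ n).-1 ->
  exists M : 'M[F]_((2 ^ n).-1), linear_AONT ((2 ^ n) - 3)%N M.
Proof.
move=> cF ps.
have n2 : (2 <= n)%N by case: n ps {cF} => [|[|n]].
have N4 : (4 <= 2 ^ n)%N.
  by rewrite -(subnKC n2) expnD (_ : 4 = 2 ^ 2 * 1)%N // leq_mul2l /= expn_gt0.
set s := (2 ^ n).-1 in ps *.
have Ns : (2 ^ n)%N = s.+1 by rewrite /s prednK // expn_gt0.
have [al /andP [al0 al1]] : exists al : F, (al != 0) && (al != 1).
  case: (pickP (fun x : F => (x != 0) && (x != 1))) => [x hx|H]; first by exists x.
  have : (#|[set: F]| <= #|[set (0:F)%R; (1:F)%R]|)%N.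
    apply: subset_leq_card; apply/subsetP => x _.
    by have := H x; rewrite !inE; case: (x == 0%R) => //= /negbFE ->; rewrite ?orbT.
  rewrite cardsT cF cards2 => h; have : (2 ^ n <= 2)%N by apply: (leq_trans h); case: (_ != _).
  lia.
have als : al ^+ s = 1.
  apply: (mulIf al0); rewrite mul1r -exprSr -Ns -cF; exact: expf_card.
have E := expo ps al1 als.
pose A : 'M[F]_s := \matrix_(i < s, j < s) al ^+ (i * j).
have Au : A \in unitmx.
  have -> : A = Vandermonde s (\row_(j < s) al ^+ j).
    by apply/matrixP => i j; rewrite !mxE -exprM mulnC.
  rewrite unitmxE unitfE det_Vandermonde; apply/prodf_neq0 => i _.
  apply/prodf_neq0 => j ij; rewrite !mxE subr_eq0; apply/eqP => e.
  have : al ^+ (j - i) = 1.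
    apply: (mulIf (expf_neq0 i al0)); rewrite mul1r -exprD subnK ?e //.
    exact: ltnW.
  move/E/(dvdn_leq _); rewrite subn_gt0 => /(_ ij).
  have := ltn_ord j; lia.
exists (invmx A); split; first by rewrite unitmx_inv.
apply: key => //; first lia.
have key2 x y K L : (0 < K < s)%N -> (0 < L < s)%N -> x = (y + K * L)%N -> al ^+ x != al ^+ y.
  move=> hK hL ->; rewrite exprD; apply/eqP => e.
  have : al ^+ (K * L) = 1.
    by apply: (mulfI (expf_neq0 y al0)); rewrite e mulr1.
  move/E; rewrite Euclid_dvdM //; case/orP => /(dvdn_leq _); lia.
move=> k1 k2 l1 l2 hk hl; rewrite !mxE -!exprD.
have := ltn_ord k1; have := ltn_ord k2; have := ltn_ord l1; have := ltn_ord l2.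
move=> h1 h2 h3 h4.
have /orP [hk'|hk'] : (k1 < k2)%N || (k2 < k1)%N by rewrite -neq_ltn.
all: have /orP [hl'|hl'] : (l1 < l2)%N || (l2 < l1)%N by rewrite -neq_ltn.
- apply: (key2 _ _ (k2 - k1)%N (l2 - l1)%N); [lia|lia|nia].
- rewrite eq_sym; apply: (key2 _ _ (k2 - k1)%N (l1 - l2)%N); [lia|lia|nia].
- rewrite eq_sym; apply: (key2 _ _ (k1 - k2)%N (l2 - l1)%N); [lia|lia|nia].
- apply: (key2 _ _ (k1 - k2)%N (l1 - l2)%N); [lia|lia|nia].
Qed.
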